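(* Fix constants $c,C,s_0,s_1,T>0$. Then there exists $N$ (depending only on these constants) such that the following holds for every $n\ge N$. Let $A$ be an $n\times n$ real symmetric positive definite matrix with diagonal entries $a_1<a_2<\dots<a_n$, satisfying $|a_k-a_l|\ge cn$ for $k\ne l$ and $r_k=\sum_{l\ne k}|A(k,l)|\le C$ for all $k$. Let $S$ be an $n\times n$ real symmetric matrix with $s_0\le S(k,k)\le s_1$ for all $k$ and $|S(k,l)|\le s_1/n$ for all $k\ne l$, and let $0<t\le T$. Let $\lambda_1\le\dots\le\lambda_n$ be the eigenvalues of $A$ and $\tilde\lambda_1\le\dots\le\tilde\lambda_n$ the eigenvalues of $A+tS$. Then $$\lambda_1\le\tilde\lambda_1\le\lambda_2\le\tilde\lambda_2\le\cdots\le\lambda_n\le\tilde\lambda_n.$$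
   Context: This formalizes the setting ''diagonal separation $\mathcal{O}(n)$, off-diagonal row sums $\mathcal{O}(1)$ for $A$; perturbation $S$ with off-diagonal entries $\mathcal{O}(1/n)$, positive diagonal entries $\mathcal{O}(1)$; $t>0$, $t=\mathcal{O}(1)$''. *)

(* Defs.v *)
From mathcomp Require Import all_boot all_order all_algebra.
From mathcomp Require Import reals.
Set Implicit Arguments. Unset Strict Implicit. Unset Printing Implicit Defensive.
Import Order.TTheory GRing.Theory Num.Theory.
Local Open Scope ring_scope.

Definition symmetric_mx (R : realType) (n : nat) (M : 'M[R]_n) : Prop :=
  M^T = M.

Definition posdef_mx (R : realType) (n : nat) (M : 'M[R]_n) : Prop :=
  symmetric_mx M /\ forall v : 'rV[R]_n, v != 0 -> 0 < (v *m M *m v^T) 0 0.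

Definition sorted_eigenvalues (R : realType) (n : nat) (M : 'M[R]_n)
    (l : seq R) : Prop :=
  [/\ size l = n, sorted <=%R l &
      char_poly M = \prod_(x <- l) ('X - x%:P)].

(* Main.v *)
Require Import Defs.
From mathcomp Require Import all_boot all_order all_algebra.
From mathcomp Require Import reals.
From mathcomp Require Import zify ring lra.
Import Order.TTheory GRing.Theory Num.Theory.
Local Open Scope ring_scope.

Section Spec.
Variable R : realType.

Lemma sym_exp n (B : 'M[R]_n.+1) k : B^T = B -> (B ^+ k)^T = B ^+ k.
Proof.
move=> sB; elim: k => [|k IH].
  by rewrite !expr0; apply/matrixP => i j; rewrite !mxE eq_sym.
by rewrite exprS -mulmxE trmx_mul IH sB !mulmxE -exprSr -exprS.
Qed.

Lemma mulmxtr0 n (X : 'M[R]_n) : X *m X^T = 0 -> X = 0.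
Proof.
move=> H; apply/matrixP => i j; rewrite mxE.
have := congr1 (fun M : 'M[R]_n => M i i) H; rewrite !mxE => /eqP.
rewrite psumr_eq0; last by move=> k _; rewrite mxE -expr2 sqr_ge0.
move/allP => /(_ j (mem_index_enum _)) /implyP /(_ isT).
by rewrite mxE -expr2 sqrf_eq0 => /eqP.
Qed.

Lemma sym_nil n (B : 'M[R]_n.+1) m : B^T = B -> B ^+ m = 0 -> B = 0.
Proof.
move=> sB; elim/ltn_ind: m => m IH Hm.
case: m IH Hm => [|[|m]] IH Hm.
- by move: Hm; rewrite expr0 => /eqP; rewrite oner_eq0.
- by rewrite -(expr1 B).
- set k := (m.+2 - m.+2./2)%N.
  have h0 : (0 < m.+2./2)%N by [].
  have e := odd_double_half m.+2; rewrite -addnn in e.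
  have h2 : (m.+2./2 + m.+2./2 <= m.+2)%N by lia.
  have lt_k : (k < m.+2)%N by rewrite /k; lia.
  apply: (IH k lt_k); apply: mulmxtr0.
  rewrite sym_exp // mulmxE -exprD.
  have -> : (k + k = m.+2 + (k + k - m.+2))%N.
    rewrite subnKC //; rewrite /k; lia.
  by rewrite exprD Hm mul0r.
Qed.

Lemma prod_dvd_undup (s : seq R) :
  \prod_(x <- s) ('X - x%:P) %| (\prod_(x <- undup s) ('X - x%:P)) ^+ size s.
Proof.
elim: s => [|x s IH]; first by rewrite !big_nil expr0 dvdpp.
rewrite [size _]/= big_cons exprS; apply: dvdp_mul.
  by rewrite dvdp_XsubCl root_prod_XsubC mem_undup inE eqxx.
apply: dvdp_trans IH _; apply: dvdp_exp2r => /=.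
case: ifP => _; first exact: dvdpp.
by rewrite big_cons dvdp_mulIr.
Qed.

Lemma horner_sym n (M : 'M[R]_n.+1) p : M^T = M -> (horner_mx M p)^T = horner_mx M p.
Proof.
move=> sM; elim/poly_ind: p => [|p c IH]; first by rewrite rmorph0 trmx0.
rewrite rmorphD rmorphM /= horner_mx_X horner_mx_C linearD /= tr_scalar_mx.
rewrite -mulmxE trmx_mul IH sM; congr (_ + _).
by have := comm_mx_horner p (comm_mx_refl M); rewrite /comm_mx.
Qed.

Lemma sym_diagonalizable n (M : 'M[R]_n.+1) (lam : seq R) :
  M^T = M -> size lam = n.+1 -> char_poly M = \prod_(x <- lam) ('X - x%:P) ->
  exists2 P : 'M[R]_n.+1, P \in unitmx & is_diag_mx (P *m M *m invmx P).
Proof.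
move=> sM slam cM.
have [P Pu HP] : exists2 P : 'M_n.+1, P \in unitmx & similar_diag P M.
  apply/diagonalizableP; exists (undup lam); first exact: undup_uniq.
  rewrite dvd_mxminpoly; apply/eqP.
  apply: (@sym_nil _ _ n.+1); first exact: horner_sym.
  rewrite -rmorphXn /=; apply/eqP; rewrite -dvd_mxminpoly.
  apply: dvdp_trans (mxminpoly_dvd_char M) _.
  by rewrite cM -slam; apply: prod_dvd_undup.
by exists P => //; rewrite -conjumx.
Qed.
End Spec.


Section Loc.
Variable R : realType.

Lemma sumB n (P : pred 'I_n) (F : 'I_n -> R) B :
  0 <= B -> (forall l, P l -> F l <= B) -> \sum_(l < n | P l) F l <= n%:R * B.
Proof.
move=> B0 HF; apply: (@le_trans _ _ (\sum_(l < n | P l) B)); first exact: ler_sum.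
rewrite big_mkcond /= (@le_trans _ _ (\sum_(l < n) B)) //.
  by apply: ler_sum => l _; case: ifP.
by rewrite sumr_const card_ord mulr_natl.
Qed.

Lemma argmax_ex n (f : 'I_n -> R) (j0 : 'I_n) : exists j, forall l, f l <= f j.
Proof.
case: (@arg_maxP _ R 'I_n j0 xpredT f isT) => j _ Hj.
by exists j => l; apply: Hj.
Qed.

Variables (n : nat) (M : 'M[R]_n) (K g : R).
Hypothesis sM : M^T = M.
Hypothesis rowK : forall k : 'I_n, \sum_(l < n | l != k) `|M k l| <= K.
Hypothesis gap : forall k l : 'I_n, k != l -> g <= `|M k k - M l l|.
Hypothesis K0 : 0 <= K.
Hypothesis Kg : 2 * K < g.

Lemma Msym i j : M i j = M j i.
Proof. by rewrite -{1}sM mxE. Qed.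

Lemma eig_col (u : 'rV[R]_n) mu : u *m M = mu *: u -> forall j,
  (mu - M j j) * u 0 j = \sum_(l < n | l != j) u 0 l * M j l.
Proof.
move=> Hu j; have := congr1 (fun v : 'rV_n => v 0 j) Hu; rewrite !mxE.
rewrite (bigD1 j) //= => E.
have -> : (mu - M j j) * u 0 j = mu * u 0 j - u 0 j * M j j by ring.
rewrite -E addrAC subrr add0r.
by apply: eq_bigr => l _; rewrite Msym.
Qed.

Arguments eig_col [u mu].

Lemma bound_sum (u : 'rV[R]_n) j B : 0 <= B -> (forall l, l != j -> `|u 0 l| <= B) ->
  `|\sum_(l < n | l != j) u 0 l * M j l| <= B * K.
Proof.
move=> B0 Hu; apply: le_trans (ler_norm_sum _ _ _) _.
apply: (@le_trans _ _ (\sum_(l < n | l != j) B * `|M j l|)).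
  by apply: ler_sum => l Hl; rewrite normrM ler_wpM2r // Hu.
by rewrite -mulr_sumr ler_wpM2l.
Qed.

Lemma loc (u : 'rV[R]_n) mu j : u *m M = mu *: u -> u 0 j = 1 ->
  (forall l, `|u 0 l| <= 1) ->
  `|mu - M j j| <= K /\ forall l, l != j -> `|u 0 l| * (g - K) <= K.
Proof.
move=> Hu uj u1.
have H1 : `|mu - M j j| <= K.
  have := eig_col Hu j; rewrite uj mulr1 => ->.
  by rewrite -[K]mul1r; apply: bound_sum.
split=> // l lj.
have := eig_col Hu l => E.
have H2 : `|(mu - M l l) * u 0 l| <= K.
  by rewrite E -[K]mul1r; apply: bound_sum.
rewrite normrM in H2; apply: le_trans H2; rewrite mulrC ler_wpM2r //.
have := @gap j l ltac:(by rewrite eq_sym); have := lerB_dist (M j j - M l l) (M j j - mu).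
rewrite (_ : M j j - M l l - (M j j - mu) = mu - M l l); last by ring.
move=> h1 h2; rewrite [`|M j j - mu|]distrC in h1; lra.
Qed.

Arguments loc [u mu j].

Definition eps := K / (g - K).

Lemma eps_ge0 : 0 <= eps.
Proof. have K0' := K0; have Kg' := Kg; by rewrite /eps divr_ge0 //; lra. Qed.

Lemma loc_eps (u : 'rV[R]_n) mu j : u *m M = mu *: u -> u 0 j = 1 ->
  (forall l, `|u 0 l| <= 1) ->
  `|mu - M j j| <= K /\ forall l, l != j -> `|u 0 l| <= eps.
Proof.
move=> Hu uj u1; have [H1 H2] := loc Hu uj u1; split=> // l lj.
have K0' := K0; have Kg' := Kg.
by rewrite /eps ler_pdivlMr ?H2 //; lra.
Qed.

Lemma ortho (u w : 'rV[R]_n) mu nu : u *m M = mu *: u -> w *m M = nu *: w ->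
  (mu - nu) * (\sum_l u 0 l * w 0 l) = 0.
Proof.
move=> Hu Hw.
have E : u *m M *m w^T = u *m (w *m M)^T by rewrite trmx_mul sM mulmxA.
rewrite Hu Hw -scalemxAl linearZ /= -scalemxAr in E.
have := congr1 (fun v : 'M_1 => v 0 0) E; rewrite !mxE => E2.
rewrite mulrBl; apply/eqP; rewrite subr_eq0; apply/eqP.
by rewrite (_ : \sum_l u 0 l * w 0 l = \sum_l u 0 l * w^T l 0) ?E2 //;
  apply: eq_bigr => l _; rewrite mxE.
Qed.

Lemma dot_ge (u w : 'rV[R]_n) j : u 0 j = 1 -> w 0 j = 1 ->
  (forall l, l != j -> `|u 0 l| <= eps) -> (forall l, l != j -> `|w 0 l| <= eps) ->
  1 - n%:R * eps ^+ 2 <= \sum_l u 0 l * w 0 l.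
Proof.
move=> uj wj Hu Hw; rewrite (bigD1 j) //= uj wj mul1r lerD2l.
have : `|\sum_(l < n | l != j) u 0 l * w 0 l| <= n%:R * eps ^+ 2.
  apply: le_trans (ler_norm_sum _ _ _) _; apply: sumB; first exact: exprn_ge0 eps_ge0.
  by move=> l lj; rewrite normrM expr2 ler_pM ?Hu ?Hw.
by rewrite ler_norml => /andP[].
Qed.

End Loc.

Arguments eps {R}.

Lemma list_match (R : realType) n' (f : 'I_n'.+1 -> R) (lam : seq R) :
  (forall i j : 'I_n'.+1, (i < j)%N -> f i < f j) -> (forall k, f k \in lam) ->
  size lam = n'.+1 -> sorted <=%R lam -> forall k : 'I_n'.+1, lam`_k = f k.
Proof.
move=> Hf Hin slam sl k.
set s := mkseq (fun m => f (inord m)) n'.+1.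
have ss : sorted <%R s.
  apply/(sortedP 0) => i; rewrite size_mkseq => hi.
  rewrite !nth_mkseq //; last exact: ltnW.
  by apply: Hf; rewrite !inordK //; apply: ltnW.
have us := lt_sorted_uniq ss.
have sub : {subset s <= lam} by move=> x /mapP [m _ ->]; apply: Hin.
have hsz : (size lam <= size s)%N by rewrite size_mkseq slam.
have [_ eqs] := uniq_min_size us sub hsz.
have ul : uniq lam := leq_size_uniq us sub hsz.
have pe := uniq_perm us ul eqs.
have sle : sorted <=%R s by move: ss; rewrite lt_sorted_uniq_le => /andP[].
have e : s = lam := sorted_eq le_trans le_anti sle sl pe.
by rewrite -e nth_mkseq // inord_val.
Qed.

Lemma contra2K (R : realType) (K g : R) : 2 * K < g -> g <= K + K -> False.
Proof. move=> *; lra. Qed.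

Lemma incr_help (R : realType) (K g a b c d : R) : 2 * K < g ->
  `|c - a| <= K -> `|d - b| <= K -> a < b -> g <= `|a - b| -> c < d.
Proof.
move=> Kg h1 h2 ab.
have -> : `|a - b| = b - a by rewrite distrC ger0_norm // subr_ge0 ltW.
move: h1 h2; rewrite !ler_distl => /andP[h1 h1'] /andP[h2 h2'] h; lra.
Qed.

Section SpecLoc.
Variables (R : realType) (n' : nat) (M : 'M[R]_n'.+1) (K g : R) (lam : seq R).
Hypothesis sM : M^T = M.
Hypothesis rowK : forall k : 'I_n'.+1, \sum_(l < n'.+1 | l != k) `|M k l| <= K.
Hypothesis gap : forall k l : 'I_n'.+1, k != l -> g <= `|M k k - M l l|.
Hypothesis K0 : 0 <= K.
Hypothesis Kg : 2 * K < g.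
Hypothesis incr : forall i j : 'I_n'.+1, (i < j)%N -> M i i < M j j.
Hypothesis small : n'.+1%:R * eps K g ^+ 2 < 1.
Hypothesis slam : size lam = n'.+1.
Hypothesis sorted_lam : sorted <=%R lam.
Hypothesis clam : char_poly M = \prod_(x <- lam) ('X - x%:P).

Local Notation n := n'.+1.

Theorem spectral_loc : forall k : 'I_n, `|lam`_k - M k k| <= K /\
  exists u : 'rV[R]_n, [/\ u *m M = lam`_k *: u, u 0 k = 1 &
     forall l, l != k -> `|u 0 l| <= eps K g].
Proof.
have LE := @loc_eps _ _ _ _ _ sM rowK gap K0 Kg.
have [P Pu HD] := @sym_diagonalizable _ _ _ _ sM slam clam.
set D := P *m M *m invmx P in HD.
have DP : P *m M = D *m P by rewrite /D mulmxKV.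
clearbody D.
have Drow : forall i, row i P *m M = D i i *: row i P.
  move=> i; rewrite -row_mul DP; apply/rowP => l; rewrite !mxE.
  rewrite (bigD1 i) //= big1 ?addr0 // => j ji.
  by rewrite (is_diag_mxP HD) ?mul0r // eq_sym.
have RowI : forall i, row i P *m invmx P = row i 1%:M by move=> i; rewrite -row_mul mulmxV.
pose pi i := [arg max_(l > i) `|P i l|]%O.
have Hpi : forall i l, `|P i l| <= `|P i (pi i)|.
  by move=> i l; rewrite /pi; case: arg_maxP => //= j _ Hj; apply: Hj.
have c0 : forall i, P i (pi i) != 0.
  move=> i; apply/negP => /eqP h0.
  have z : row i P = 0.
    apply/rowP => l; rewrite !mxE; apply/eqP; rewrite -normr_eq0 eq_le normr_ge0 andbT.
    by rewrite -(normr0 R) -h0 Hpi.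
  have := RowI i; rewrite z mul0mx => /rowP/(_ i); rewrite !mxE eqxx /= => /eqP.
  by rewrite eq_sym oner_eq0.
pose u i := (P i (pi i))^-1 *: row i P.
have ueig : forall i, u i *m M = D i i *: u i.
  by move=> i; rewrite /u -scalemxAl Drow !scalerA mulrC.
have u1 : forall i, u i 0 (pi i) = 1 by move=> i; rewrite /u !mxE mulVf.
have ule1 : forall i l, `|u i 0 l| <= 1.
  move=> i l; rewrite /u !mxE normrM normfV mulrC ler_pdivrMr ?mul1r ?Hpi //.
  by rewrite normr_gt0.
have LOC := fun i => LE _ _ _ (ueig i) (u1 i) (ule1 i).
have eps0 : 0 <= eps K g by apply: (@eps_ge0 R K g K0 Kg).
have inj_pi : injective pi.
  move=> i i' e; apply/eqP; apply: contraT => nii.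
  set j := pi i in e.
  have [hD|hD] := eqVneq (D i i) (D i' i').
  - pose w := u i - u i'.
    have weig : w *m M = D i i *: w by rewrite /w mulmxBl !ueig hD scalerBr.
    have wj : w 0 j = 0.
      rewrite /w [X in X = 0]mxE [X in _ + X = 0]mxE {1}/j u1 e u1; exact: subrr.
    have wn0 : w != 0.
      apply/eqP => w0; have : u i = u i' by apply/eqP; rewrite -subr_eq0 -/w w0.
      move=> /(congr1 (fun v => v *m invmx P)); rewrite /u -!scalemxAl !RowI.
      move=> /rowP/(_ i); rewrite !mxE eqxx eq_sym (negbTE nii) mulr1 mulr0 => /eqP.
      by rewrite invr_eq0 (negbTE (c0 i)).
    have [l Hl] := @argmax_ex R _ (fun l => `|w 0 l|) j.
    have wl0 : w 0 l != 0.
      apply/negP => /eqP h0; move/eqP: wn0; apply; apply/rowP => l'; rewrite [RHS]mxE.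
      apply/eqP; rewrite -normr_eq0 eq_le normr_ge0 andbT.
      by rewrite -(normr0 R) -h0 Hl.
    pose w' := (w 0 l)^-1 *: w.
    have weig' : w' *m M = D i i *: w' by rewrite /w' -scalemxAl weig !scalerA mulrC.
    have w'l : w' 0 l = 1 by rewrite /w' mxE mulVf.
    have w'le : forall l', `|w' 0 l'| <= 1.
      move=> l'; rewrite /w' mxE normrM normfV mulrC ler_pdivrMr ?mul1r ?Hl //.
      by rewrite normr_gt0.
    have [Hw' _] := LE _ _ _ weig' w'l w'le.
    have lj : l != j by apply/eqP => h; move: wl0; rewrite h wj eqxx.
    have G := gap _ _ lj.
    have T1 := ler_distD (D i i) (M l l) (M j j).
    have L1 : `|D i i - M j j| <= K := proj1 (LOC i).
    rewrite distrC in Hw'.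
    have H3 := le_trans G (le_trans T1 (lerD Hw' L1)).
    by case: (@contra2K R _ _ Kg H3).
  - have := @ortho _ _ _ sM _ _ _ _ (ueig i) (ueig i').
    move/eqP; rewrite mulf_eq0 subr_eq0 (negbTE hD) /= => /eqP S0.
    have H1 : u i' 0 j = 1 by rewrite e u1.
    have H2 : forall l, l != j -> `|u i' 0 l| <= eps K g by rewrite e; exact: (proj2 (LOC i')).
    have := @dot_ge _ _ _ _ K0 Kg (u i) (u i') j (u1 i) H1 (proj2 (LOC i)) H2.
    rewrite S0; have sm := small; lra.
pose sigma := invF inj_pi.
have ps : forall k, pi (sigma k) = k := f_invF inj_pi.
pose mu k := D (sigma k) (sigma k).
have Lk : forall k, `|mu k - M k k| <= K.
  by move=> k; have := proj1 (LOC (sigma k)); rewrite ps.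
have mu_incr : forall k k' : 'I_n, (k < k')%N -> mu k < mu k'.
  move=> k k' kk'; apply: (@incr_help R _ _ _ _ _ _ Kg (Lk k) (Lk k') (incr _ _ kk')).
  by apply: gap; rewrite neq_ltn kk'.
have mem : forall k, mu k \in lam.
  move=> k; rewrite -root_prod_XsubC -clam -eigenvalue_root_char.
  apply/eigenvalueP; exists (row (sigma k) P); first exact: Drow.
  apply/negP => /eqP h.
  have := congr1 (fun v : 'rV_n => v 0 (pi (sigma k))) h; rewrite !mxE => h'.
  by move: (c0 (sigma k)); rewrite h' eqxx.
have LM := @list_match R _ _ _ mu_incr mem slam sorted_lam.
move=> k; rewrite LM; split; first exact: Lk.
exists (u (sigma k)); split; first exact: ueig.
  by rewrite -{2}(ps k) u1.
by rewrite -{1}(ps k); exact: (proj2 (LOC (sigma k))).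
Qed.
End SpecLoc.


Lemma sum_abs_le (R : realType) n (v : 'rV[R]_n) k e : v 0 k = 1 ->
  (forall l, l != k -> `|v 0 l| <= e) -> 0 <= e ->
  \sum_l `|v 0 l| <= 1 + n%:R * e.
Proof.
move=> vk Hv e0; rewrite (bigD1 k) //= vk normr1 lerD2l.
exact: sumB.
Qed.

Lemma bil_lb (R : realType) n (S : 'M[R]_n) (v w : 'rV[R]_n) k e s0 s1 :
  v 0 k = 1 -> w 0 k = 1 ->
  (forall l, l != k -> `|v 0 l| <= e) -> (forall l, l != k -> `|w 0 l| <= e) ->
  0 <= e -> 0 <= s0 -> 0 <= s1 ->
  (forall m, s0 <= S m m <= s1) ->
  (forall m l, m != l -> `|S m l| <= s1 / n%:R) ->
  s0 - 2 * s1 * e - 2 * s1 * (n%:R * e ^+ 2) <=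
  \sum_m w 0 m * (\sum_l S m l * v 0 l).
Proof.
move=> vk wk Hv Hw e0 s00 s10 HS HSo.
have n0 : (0 < n)%N by apply: leq_ltn_trans (ltn_ord k).
have nn : n%:R != 0 :> R by rewrite pnatr_eq0 -lt0n.
have npos : 0 < n%:R :> R by rewrite ltr0n.
have sn0 : 0 <= s1 / n%:R by rewrite divr_ge0 // ler0n.
have nsn : n%:R * (s1 / n%:R) = s1 by rewrite mulrC -mulrA mulVf // mulr1.
have rk : s0 - s1 * e <= \sum_l S k l * v 0 l.
  rewrite (bigD1 k) //= vk mulr1.
  have : `|\sum_(l < n | l != k) S k l * v 0 l| <= s1 * e.
    apply: le_trans (ler_norm_sum _ _ _) _.
    rewrite -nsn -mulrA; apply: sumB; first exact: mulr_ge0.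
    by move=> l lk; rewrite normrM ler_pM // ?HSo ?Hv // eq_sym.
  rewrite ler_norml => /andP[h1 _].
  have := HS k => /andP[h2 _]; lra.
have rm : forall m, m != k -> `|\sum_l S m l * v 0 l| <= s1 / n%:R + 2 * s1 * e.
  move=> m mk; rewrite (bigD1 m) //=.
  apply: le_trans (ler_normD _ _) _.
  have h1 : `|S m m * v 0 m| <= s1 * e.
    rewrite normrM ler_pM ?Hv //.
    by have := HS m => /andP[a b]; rewrite ger0_norm //; lra.
  have h2 : `|\sum_(l < n | l != m) S m l * v 0 l| <= s1 / n%:R * (1 + n%:R * e).
    apply: le_trans (ler_norm_sum _ _ _) _.
    apply: (@le_trans _ _ (\sum_l s1 / n%:R * `|v 0 l|)).
      rewrite [X in _ <= X](bigD1 m) //= -[X in X <= _]add0r lerD //.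
        by rewrite mulr_ge0.
      by apply: ler_sum => l lm; rewrite normrM ler_wpM2r // HSo // eq_sym.
    by rewrite -mulr_sumr ler_wpM2l // (@sum_abs_le R _ _ _ _ vk Hv).
  have : s1 / n%:R * (1 + n%:R * e) = s1 / n%:R + s1 * e.
    by rewrite mulrDr mulr1 mulrA mulfVK.
  lra.
rewrite (bigD1 k) //= wk mul1r.
have : `|\sum_(m < n | m != k) w 0 m * \sum_l S m l * v 0 l| <=
    n%:R * (e * (s1 / n%:R + 2 * s1 * e)).
  apply: le_trans (ler_norm_sum _ _ _) _; apply: sumB.
    by rewrite mulr_ge0 // addr_ge0 // !mulr_ge0.
  by move=> m mk; rewrite normrM ler_pM ?Hw ?rm.
have -> : n%:R * (e * (s1 / n%:R + 2 * s1 * e)) = s1 * e + 2 * s1 * (n%:R * e ^+ 2).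
  by rewrite mulrCA mulrDr nsn; ring.
rewrite ler_norml => /andP[h _]; lra.
Qed.


Lemma thr (R : realType) (a b B x : R) : 0 < a -> b / a <= B -> B < x -> b <= a * x.
Proof.
move=> a0 h1 h2; have : b / a < x by apply: le_lt_trans h2.
by rewrite ltr_pdivrMr // mulrC => /ltW.
Qed.

Lemma div_bound (R : realType) (p q r s : R) : 0 < p -> p * q <= r -> r <= p * s -> q <= s.
Proof. by move=> p0 h1 h2; rewrite -(ler_pM2l p0); apply: le_trans h2. Qed.

Lemma tS_bound (R : realType) (t T s0 s1 p q : R) : 0 < t -> t <= T -> 0 < s0 ->
  s0 <= p <= s1 -> s0 <= q <= s1 -> `|t * (q - p)| <= T * s1.
Proof.
move=> t0 tT s00 /andP[p1 p2] /andP[q1 q2].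
rewrite normrM (gtr0_norm t0); apply: ler_pM => //; first exact: ltW.
by rewrite ler_distl; apply/andP; split; lra.
Qed.

Lemma sq_le (R : realType) (a b : R) : 0 <= a -> a <= b -> a ^+ 2 <= b ^+ 2.
Proof. by move=> a0 ab; rewrite !expr2 ler_pM. Qed.

Theorem theorem2 (R : realType) (c C s0 s1 T : R) :
  0 < c -> 0 < C -> 0 < s0 -> 0 < s1 -> 0 < T ->
  exists N : nat, forall (n : nat), (N <= n)%N ->
  forall (A S : 'M[R]_n) (t : R),
    posdef_mx A ->
    (forall i j : 'I_n, (i < j)%N -> A i i < A j j) ->
    (forall k l : 'I_n, k != l -> c * n%:R <= `|A k k - A l l|) ->
    (forall k : 'I_n, \sum_(l < n | l != k) `|A k l| <= C) ->
    symmetric_mx S ->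
    (forall k : 'I_n, s0 <= S k k <= s1) ->
    (forall k l : 'I_n, k != l -> `|S k l| <= s1 / n%:R) ->
    0 < t -> t <= T ->
    forall lam lamt : seq R,
      sorted_eigenvalues A lam ->
      sorted_eigenvalues (A + t *: S) lamt ->
      (forall i : nat, (i < n)%N -> lam`_i <= lamt`_i) /\
      (forall i : nat, (i.+1 < n)%N -> lamt`_i <= lam`_i.+1).
Proof.
move=> c0 C0 s00 s10 T0.
pose K := C + T * s1.
have Ts10 : 0 < T * s1 by apply: mulr_gt0.
have K0 : 0 < K by rewrite /K; lra.
pose b1 := 2 * (C + 2 * T * s1).
pose b2 := 16 * K * K.
pose b3 := 16 * s1 * K.
pose b4 := 32 * K * K * s1.
have a1 : 0 < c by [].
have a2 : 0 < c * c by apply: mulr_gt0.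
have a3 : 0 < c * s0 by apply: mulr_gt0.
have a4 : 0 < c * c * s0 by apply: mulr_gt0.
have t1 : 0 <= b1 / c by apply: divr_ge0; rewrite /b1; lra.
have t2 : 0 <= b2 / (c * c) by apply: divr_ge0; [rewrite /b2; nra | lra].
have t3 : 0 <= b3 / (c * s0) by apply: divr_ge0; [rewrite /b3; nra | lra].
have t4 : 0 <= b4 / (c * c * s0) by apply: divr_ge0; [rewrite /b4; nra | lra].
pose B := b1 / c + b2 / (c * c) + b3 / (c * s0) + b4 / (c * c * s0).
have B0 : 0 <= B by rewrite /B; lra.
exists (Num.Def.archi_bound B) => n nN.
case: n nN => [|n'] nN.
  by move=> *; split=> i; rewrite ?ltn0.
set n := n'.+1 in nN *.
move=> A S t pA incrA gapA rowA sS diagS offS t0 tT lam lamt [slam sl clam] [slamt slt clamt].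
pose x : R := n%:R.
have xB : B < x.
  apply: lt_le_trans (archi_boundP B0) _; by rewrite /x ler_nat.
have H1 : b1 <= c * x by apply: (@thr R _ _ _ _ a1 _ xB); rewrite /B; lra.
have H2 : b2 <= c * c * x by apply: (@thr R _ _ _ _ a2 _ xB); rewrite /B; lra.
have H3 : b3 <= c * s0 * x by apply: (@thr R _ _ _ _ a3 _ xB); rewrite /B; lra.
have H4 : b4 <= c * c * s0 * x by apply: (@thr R _ _ _ _ a4 _ xB); rewrite /B; lra.
have x0 : 0 < x by rewrite /x ltr0n.
pose g := c * x - T * s1.
have gK : c * x / 2 <= g - K by rewrite /g /K; move: H1; rewrite /b1; lra.
have Kg : 2 * K < g by rewrite /g /K; move: H1; rewrite /b1; lra.
pose e := eps K g.
have e0 : 0 <= e by apply: (@eps_ge0 R K g (ltW K0) Kg).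
have cx0 : 0 < c * x by apply: mulr_gt0.
have E1 : e * (c * x) <= 2 * K.
  rewrite /e /eps mulrAC ler_pdivrMr; last by lra.
  nra.
have ecx0 : 0 <= e * (c * x) by apply: mulr_ge0; [ | apply: ltW].
have Esq : (e * (c * x)) ^+ 2 <= (2 * K) ^+ 2 by apply: sq_le.
have Hb : x * e ^+ 2 <= 1 / 4.
  apply: (@div_bound R (c * c * x) _ ((2 * K) ^+ 2)); first by apply: mulr_gt0.
    by apply: le_trans Esq; rewrite le_eqVlt; apply/orP; left; apply/eqP; ring.
  by move: H2; rewrite /b2; nra.
have Hc : s1 * e <= s0 / 8.
  apply: (@div_bound R (c * x) _ (s1 * (2 * K))) => //.
    have -> : c * x * (s1 * e) = s1 * (e * (c * x)) by ring.
    by apply: ler_pM => //; apply: ltW.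
  by move: H3; rewrite /b3; nra.
have Hd : s1 * (x * e ^+ 2) <= s0 / 8.
  apply: (@div_bound R (c * c * x) _ (s1 * (2 * K) ^+ 2)); first by apply: mulr_gt0.
    have -> : c * c * x * (s1 * (x * e ^+ 2)) = s1 * (e * (c * x)) ^+ 2 by ring.
    by apply: ler_pM => //; [apply: ltW | apply: exprn_ge0].
  by move: H4; rewrite /b4; nra.
have sA : A^T = A by case: pA.
have rowA' : forall k, \sum_(l < n | l != k) `|A k l| <= K.
  by move=> k; apply: le_trans (rowA k) _; rewrite /K; lra.
have gapA' : forall k l, k != l -> g <= `|A k k - A l l|.
  by move=> k l kl; apply: le_trans (gapA k l kl); rewrite /g -/x; lra.
have small : n%:R * eps K g ^+ 2 < 1 by rewrite -/x -/e; lra.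
have SA := @spectral_loc R n' A K g lam sA rowA' gapA' (ltW K0) Kg incrA small slam sl clam.
pose P := A + t *: S.
have PE : forall i j, P i j = A i j + t * S i j by move=> i j; rewrite !mxE.
have sP : P^T = P by rewrite /P linearD linearZ /= sA sS.
have dS : forall i j, `|t * (S j j - S i i)| <= T * s1.
  by move=> i j; apply: (@tS_bound R _ _ s0) => //.
have rowP : forall k, \sum_(l < n | l != k) `|P k l| <= K.
  move=> k; apply: (@le_trans _ _ (\sum_(l < n | l != k) (`|A k l| + t * (s1 / n%:R)))).
    apply: ler_sum => l lk; rewrite PE; apply: le_trans (ler_normD _ _) _.
    rewrite lerD2l normrM gtr0_norm // ler_pM2l //; apply: offS; rewrite eq_sym.
    exact: lk.
  rewrite big_split /=.
  have h1 : \sum_(l < n | l != k) t * (s1 / n%:R) <= n%:R * (t * (s1 / n%:R)).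
    by apply: sumB => //; rewrite mulr_ge0 ?divr_ge0 ?ltW.
  have h2 : n%:R * (t * (s1 / n%:R)) = t * s1.
    have nn : n%:R != 0 :> R by rewrite pnatr_eq0.
    by field.
  have h3 : t * s1 <= T * s1 by rewrite ler_pM2r.
  have h4 := rowA k; rewrite /K; lra.
have gapP : forall k l, k != l -> g <= `|P k k - P l l|.
  move=> k l kl; rewrite !PE.
  have h1 := lerB_dist (A k k - A l l) (t * (S l l - S k k)).
  have -> : A k k + t * S k k - (A l l + t * S l l) = A k k - A l l - t * (S l l - S k k) by ring.
  have h2 := gapA k l kl; have h3 := dS k l; rewrite /g -/x; lra.
have incrP : forall i j : 'I_n, (i < j)%N -> P i i < P j j.
  move=> i j ij; rewrite !PE.
  have ij' : i != j by rewrite neq_ltn ij.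
  have h1 := gapA i j ij'.
  have h0 : A i i <= A j j by apply: ltW; apply: incrA.
  have e1 : `|A i i - A j j| = A j j - A i i by rewrite distrC ger0_norm // subr_ge0.
  rewrite e1 in h1.
  have := dS i j; rewrite ler_norml => /andP[h2 _].
  have hg : 0 < g by lra.
  rewrite /g -/x in hg; lra.
have SP := @spectral_loc R n' P K g lamt sP rowP gapP (ltW K0) Kg incrP small slamt slt clamt.
split.
- move=> i hi; pose k := Ordinal hi.
  have [_ [v [vA vk vl]]] := SA k.
  have [_ [w [wP wk wl]]] := SP k.
  rewrite /= in vA wP.
  have M1 : w *m P *m v^T = lamt`_i *: (w *m v^T) by rewrite wP -scalemxAl.
  have M2 : w *m A *m v^T = lam`_i *: (w *m v^T).
    by rewrite -mulmxA -{1}sA -trmx_mul vA linearZ /= scalemxAr.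
  have M3 : w *m P *m v^T = w *m A *m v^T + t *: (w *m (S *m v^T)).
    by rewrite /P mulmxDr mulmxDl -scalemxAr -scalemxAl mulmxA.
  rewrite M1 M2 in M3.
  have := congr1 (fun Z : 'M_1 => Z 0 0) M3; rewrite !mxE => E.
  have Dv := @dot_ge R n K g (ltW K0) Kg w v k wk vk wl vl.
  have Q := @bil_lb R n S v w k e s0 s1 vk wk vl wl e0 (ltW s00) (ltW s10) diagS offS.
  rewrite -/x -/e in Dv.
  set D := \sum_l w 0 l * v 0 l in E Dv.
  set Qs := \sum_m w 0 m * _ in Q.
  have eD : \sum_j w 0 j * v^T j 0 = D by apply: eq_bigr => j _; rewrite mxE.
  have eQ : \sum_j w 0 j * (S *m v^T) j 0 = Qs.
    apply: eq_bigr => j _; rewrite !mxE; congr (_ * _); apply: eq_bigr => l _; rewrite mxE.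
    done.
  rewrite eD eQ in E.
  have EQ : (lamt`_i - lam`_i) * D = t * Qs by rewrite mulrBl E; ring.
  have Dp : 0 < D by lra.
  have Qp : 0 < Qs by lra.
  have : 0 < (lamt`_i - lam`_i) * D by rewrite EQ mulr_gt0.
  rewrite pmulr_lgt0 // => h; lra.
- move=> i hi; pose k := Ordinal (ltnW hi); pose k1 := Ordinal hi.
  have [h1 _] := SP k.
  have [h2 _] := SA k1.
  rewrite /= in h1 h2.
  have kk1 : (k < k1)%N by [].
  have h3 := incrA k k1 kk1.
  have h4 := gapA k k1 ltac:(by rewrite neq_ltn kk1).
  have e1 : `|A k k - A k1 k1| = A k1 k1 - A k k.
    by rewrite distrC ger0_norm // subr_ge0 ltW.
  rewrite e1 in h4.
  have h5 : t * S k k <= T * s1.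
    have := diagS k => /andP[a b].
    by apply: ler_pM => //; apply: ltW => //; apply: lt_le_trans s00 a.
  rewrite PE in h1.
  move: h1 h2; rewrite !ler_distl => /andP[_ h1] /andP[h2 _].
  move: H1; rewrite /b1 -/x => H1.
  rewrite /K in h1 h2; lra.
Qed.
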